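(* Let $G$ be a finite nilpotent group, $f\in\mathrm{Aut}(G)$, and for each prime $p$ dividing $|G|$ let $S_p$ be the (unique) Sylow $p$-subgroup of $G$. Suppose $Q=\mathcal{Q}(G,f)$ is connected. Then $Q$ is simply connected if and only if $\mathcal{Q}(S_p,f|_{S_p})$ is simply connected for every prime $p$ dividing $|G|$.
   Context: A quandle is a set $Q$ with a binary operation $*$ such that every left translation $L_x:y\mapsto x*y$ is bijective, $x*(y*z)=(x*y)*(x*z)$ and $x*x=x$; $Q$ is connected if $\langle L_x:x\in Q\rangle$ is transitive on $Q$. For a group $G$ and $f\in\mathrm{Aut}(G)$, $\mathcal{Q}(G,f)$ is $G$ with $x*y=xf(x^{-1}y)$ (note $f(S_p)=S_p$). For a set $S$, a quandle cocycle with values in $\mathrm{Sym}_S$ is $\theta:Q\times Q\to\mathrm{Sym}_S$ with $\theta_{x*y,x*z}\theta_{x,z}=\theta_{x,y*z}\theta_{y,z}$ and $\theta_{x,x}=1$; it is cohomologous to the trivial cocycle if there is $\gamma:Q\to\mathrm{Sym}_S$ with $\theta_{x,y}=\gamma_{x*y}\gamma_y^{-1}$ for all $x,y$. $Q$ is simply connected if it is connected and, for every set $S$, every such cocycle is cohomologous to the trivial cocycle. *)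

(* Defs.v *)
From mathcomp Require Import all_boot all_fingroup all_solvable.
From Stdlib Require Import Relations.
Set Implicit Arguments. Unset Strict Implicit. Unset Printing Implicit Defensive.
Import GroupScope.

(* The quandle Q(G,f): operation x * y = x f(x^-1 y), carried by a subset A
   of a finite group type gT (A = G, or A = a Sylow subgroup S_p). *)
Definition qop (gT : finGroupType) (f : {perm gT}) (x y : gT) : gT :=
  x * f (x^-1 * y).

(* One step of the action of a generator L_x (x in A) or of its inverse. *)
Definition lstep (T : finType) (A : {set T}) (op : T -> T -> T) (y z : T) : Prop :=
  exists2 x, x \in A & (z = op x y \/ y = op x z).

(* Connected: the group <L_x : x in A> acts transitively on A. *)
Definition qconnected (T : finType) (A : {set T}) (op : T -> T -> T) : Prop :=
  forall a b, a \in A -> b \in A -> clos_refl_trans T (lstep A op) a b.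

(* A quandle cocycle with values in Sym_S (product in Sym_S = composition). *)
Definition qcocycle (T : finType) (A : {set T}) (op : T -> T -> T) (S : Type)
  (theta : T -> T -> S -> S) : Prop :=
  [/\ (forall x y, x \in A -> y \in A -> bijective (theta x y)),
      (forall x y z, x \in A -> y \in A -> z \in A -> forall s : S,
          theta (op x y) (op x z) (theta x z s) = theta x (op y z) (theta y z s))
    & (forall x, x \in A -> forall s : S, theta x x s = s)].

(* theta is cohomologous to the trivial cocycle: theta_{x,y} = gamma_{x*y} gamma_y^{-1}. *)
Definition qcobound (T : finType) (A : {set T}) (op : T -> T -> T) (S : Type)
  (theta : T -> T -> S -> S) : Prop :=
  exists gamma : T -> S -> S,
    (forall y, y \in A -> bijective (gamma y)) /\
    (forall x y, x \in A -> y \in A -> forall s : S,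
        theta x y (gamma y s) = gamma (op x y) s).

Definition qsimply_connected (T : finType) (A : {set T}) (op : T -> T -> T) : Prop :=
  qconnected A op /\
  forall (S : Type) (theta : T -> T -> S -> S), qcocycle A op theta -> qcobound A op theta.

(* Main.v *)
Require Import Defs.
From mathcomp Require Import all_boot all_fingroup all_solvable.
From Stdlib Require Import Relations ClassicalEpsilon FunctionalExtensionality.
Set Implicit Arguments. Unset Strict Implicit. Unset Printing Implicit Defensive.
Import GroupScope.

Definition pf (gT : finGroupType) (f : {perm gT}) (u : gT) : gT := f u.

Lemma qopE (gT : finGroupType) (f : {perm gT}) (x y : gT) : qop f x y = x * pf f (x^-1 * y).
Proof. by []. Qed.

Section Basics.
Variables (gT : finGroupType) (G : {group gT}) (f : {perm gT}).
Implicit Types x y z u : gT.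
Local Notation F := (pf f).
Local Notation Fi := (pf f^-1).
Hypothesis fM : {in G &, {morph F : x y / x * y}}.
Hypothesis fG : forall x, x \in G -> F x \in G.
Hypothesis fiG : forall x, x \in G -> Fi x \in G.

Lemma FK x : Fi (F x) = x. Proof. exact: permK. Qed.
Lemma FKV x : F (Fi x) = x. Proof. exact: permKV. Qed.

Lemma f1 : F 1 = 1.
Proof.
have := fM (group1 G) (group1 G); rewrite mulg1 => /esym E.
by have := congr1 (fun u => (F 1)^-1 * u) E; rewrite mulKg mulVg.
Qed.

Lemma fV x : x \in G -> F x^-1 = (F x)^-1.
Proof.
move=> Gx; apply: (mulgI (F x)); rewrite mulgV -fM ?groupV // mulgV; exact: f1.
Qed.

Lemma qop_in (A : {group gT}) x z : (forall u, u \in A -> F u \in A) -> x \in A -> z \in A -> qop f x z \in A.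
Proof. move=> fA Ax Az; rewrite qopE groupM // fA // groupM ?groupV //. Qed.

Lemma qop_dist x y z : x \in G -> y \in G -> z \in G ->
  qop f y (qop f x z) = qop f (qop f y x) (qop f y z).
Proof.
move=> Gx Gy Gz; rewrite !qopE.
have Gyx : y^-1 * x \in G by rewrite groupM ?groupV.
have Gyz : y^-1 * z \in G by rewrite groupM ?groupV.
have Gxz : x^-1 * z \in G by rewrite groupM ?groupV.
have -> : (y * F (y^-1 * x))^-1 * (y * F (y^-1 * z)) = F (x^-1 * z).
  rewrite invMg -mulgA mulKg -fV // -fM ?groupV // invMg invgK mulgA mulgK //.
have E1 : F (y^-1 * (x * F (x^-1 * z))) = F (y^-1 * x) * F (F (x^-1 * z)).
  by rewrite mulgA fM ?fG.
by rewrite E1 mulgA.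
Qed.

Lemma qop_memE x z : x \in G -> (qop f x z \in G) = (z \in G).
Proof.
move=> Gx; rewrite qopE; apply/idP/idP => [|Gz]; last by rewrite groupM ?fG ?groupM ?groupV.
rewrite groupMl // => /fiG; rewrite FK groupMl // groupV //.
Qed.

Definition Lq x z := if z \in G then qop f x z else z.
Definition Lqi x z := if z \in G then x * Fi (x^-1 * z) else z.

Lemma Lqi_in x z : x \in G -> z \in G -> Lqi x z \in G.
Proof. by move=> Gx Gz; rewrite /Lqi Gz groupM ?fiG ?groupM ?groupV. Qed.
Lemma Lq_in x z : x \in G -> z \in G -> Lq x z \in G.
Proof. by move=> Gx Gz; rewrite /Lq Gz qop_in. Qed.

Lemma qopLqi x z : x \in G -> z \in G -> qop f x (Lqi x z) = z.
Proof. by move=> Gx Gz; rewrite /Lqi Gz qopE mulKg FKV mulKVg. Qed.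
Lemma LqiK x z : x \in G -> z \in G -> Lqi x (qop f x z) = z.
Proof. by move=> Gx Gz; rewrite /Lqi qop_memE // Gz qopE mulKg FK mulKVg. Qed.

Lemma LqKV x z : x \in G -> Lq x (Lqi x z) = z.
Proof.
move=> Gx; case Gz: (z \in G); last by rewrite /Lqi /Lq Gz Gz.
by rewrite /Lq Lqi_in // qopLqi.
Qed.
Lemma LqK x z : x \in G -> Lqi x (Lq x z) = z.
Proof.
move=> Gx; case Gz: (z \in G); last by rewrite /Lqi /Lq Gz Gz.
by rewrite /Lq Gz LqiK.
Qed.

Variables (S : Type) (th : gT -> gT -> S -> S).
Hypothesis cocy : qcocycle G (qop f) th.

Definition thi x y (t : S) : S := epsilon (inhabits t) (fun s => th x y s = t).

Lemma thKV x y t : x \in G -> y \in G -> th x y (thi x y t) = t.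
Proof.
move=> Gx Gy; case: cocy => bij _ _; case: (bij x y Gx Gy) => g _ gK.
rewrite /thi; apply: (epsilon_spec (inhabits t) (fun s => th x y s = t)).
by exists (g t); rewrite gK.
Qed.

Lemma thK x y s : x \in G -> y \in G -> thi x y (th x y s) = s.
Proof.
move=> Gx Gy; case: cocy => bij _ _; apply: (bij_inj (bij x y Gx Gy)).
by rewrite thKV.
Qed.

Definition E := (gT * S)%type.

Definition T x (e : E) : E :=
  let: (z, s) := e in if z \in G then (qop f x z, th x z s) else (z, s).
Definition Ti x (e : E) : E :=
  let: (z, t) := e in if z \in G then (Lqi x z, thi x (Lqi x z) t) else (z, t).

Lemma T_Ti x e : x \in G -> T x (Ti x e) = e.
Proof.
move=> Gx; case: e => z t /=; case Gz: (z \in G) => /=; last by rewrite Gz.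
by rewrite Lqi_in // qopLqi // thKV ?Lqi_in.
Qed.

Lemma Ti_T x e : x \in G -> Ti x (T x e) = e.
Proof.
move=> Gx; case: e => z t /=; case Gz: (z \in G) => /=; last by rewrite Gz.
by rewrite qop_memE // Gz LqiK // thK.
Qed.

Lemma T_comm x y e : x \in G -> y \in G -> T y (T x e) = T (qop f y x) (T y e).
Proof.
move=> Gx Gy; case: e => z s /=; case Gz: (z \in G) => /=; last by rewrite Gz.
rewrite !qop_memE // Gz; congr (_, _); first exact: qop_dist.
by case: cocy => _ cc _; rewrite cc.
Qed.

Lemma Ti_comm x y e : x \in G -> y \in G -> Ti y (T x e) = T (Lqi y x) (Ti y e).
Proof.
move=> Gx Gy.
have Gx' := Lqi_in Gy Gx.
have E0 : T y (T (Lqi y x) (Ti y e)) = T x (T y (Ti y e)) by rewrite T_comm // qopLqi.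
by rewrite T_Ti // in E0; rewrite -E0 Ti_T.
Qed.

Definition letter (a : gT * bool) := if a.2 then T a.1 else Ti a.1.
Definition letterQ (a : gT * bool) := if a.2 then Lq a.1 else Lqi a.1.

Fixpoint ev (w : seq (gT * bool)) (e : E) : E :=
  if w is a :: w' then letter a (ev w' e) else e.
Fixpoint evQ (w : seq (gT * bool)) (z : gT) : gT :=
  if w is a :: w' then letterQ a (evQ w' z) else z.
Definition winv (w : seq (gT * bool)) := rev (map (fun a => (a.1, ~~ a.2)) w).
Definition inA (A : {set gT}) (w : seq (gT * bool)) := all (fun a => a.1 \in A) w.

Lemma letter_fst a e : (letter a e).1 = letterQ a e.1.
Proof.
case: a => x [] /=; case: e => z s; rewrite /letterQ /letter /T /Ti /Lq /Lqi /=;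
by case: (z \in G).
Qed.

Lemma ev_fst w e : (ev w e).1 = evQ w e.1.
Proof. by elim: w => //= a w IH; rewrite letter_fst IH. Qed.

Lemma ev_cat w1 w2 e : ev (w1 ++ w2) e = ev w1 (ev w2 e).
Proof. by elim: w1 => //= a w IH; rewrite IH. Qed.
Lemma evQ_cat w1 w2 z : evQ (w1 ++ w2) z = evQ w1 (evQ w2 z).
Proof. by elim: w1 => //= a w IH; rewrite IH. Qed.

Lemma winv_cons a w : winv (a :: w) = winv w ++ [:: (a.1, ~~ a.2)].
Proof. by rewrite /winv /= rev_cons cats1. Qed.

Lemma inA_winv A w : inA A (winv w) = inA A w.
Proof. by rewrite /inA /winv all_rev all_map. Qed.

Lemma ev_winvK w e : inA G w -> ev (winv w) (ev w e) = e.
Proof.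
elim: w e => //= [[x b] w] IH e /andP[/= Gx Gw].
rewrite winv_cons ev_cat /= /letter /=; case: b => /=; rewrite ?Ti_T ?T_Ti //; exact: IH.
Qed.

Lemma ev_winvKV w e : inA G w -> ev w (ev (winv w) e) = e.
Proof.
elim: w e => //= [[x b] w] IH e /andP[/= Gx Gw].
rewrite winv_cons ev_cat /= IH // /letter /=; case: b => /=; rewrite ?Ti_T ?T_Ti //.
Qed.

Lemma evQ_winvK w z : inA G w -> evQ (winv w) (evQ w z) = z.
Proof.
elim: w z => //= [[x b] w] IH z /andP[/= Gx Gw].
rewrite winv_cons evQ_cat /= /letterQ /=; case: b => /=; rewrite ?LqK ?LqKV //; exact: IH.
Qed.

Lemma evQ_winvKV w z : inA G w -> evQ w (evQ (winv w) z) = z.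
Proof.
elim: w z => //= [[x b] w] IH z /andP[/= Gx Gw].
rewrite winv_cons evQ_cat /= IH // /letterQ /=; case: b => /=; rewrite ?LqK ?LqKV //.
Qed.

Lemma evQ_in (A : {group gT}) w z : A \subset G ->
  (forall u, u \in A -> F u \in A) -> (forall u, u \in A -> Fi u \in A) ->
  inA A w -> z \in A -> evQ w z \in A.
Proof.
move=> sAG FA FiA; elim: w => //= [[x b] w] IH /andP[/= Ax Aw] Az.
have Ae := IH Aw Az; have Ge : (evQ w z \in G) = true by exact: (subsetP sAG).
rewrite /letterQ /Lq /Lqi; case: b => /=; rewrite Ge; first exact: qop_in.
by rewrite groupM ?FiA ?groupM ?groupV.
Qed.

Lemma ev_conj w x e : inA G w -> x \in G -> ev w (T x e) = T (evQ w x) (ev w e).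
Proof.
elim: w e => //= [[y b] w] IH e /andP[/= Gy Gw] Gx.
rewrite IH // /letter /letterQ /=.
have Gw' : evQ w x \in G by apply: (@evQ_in G) => //; exact: fG.
case: b => /=; first by rewrite T_comm // /Lq Gw'.
by rewrite Ti_comm.
Qed.

Lemma ev_central n w e : inA G n -> inA G w -> (forall z, z \in G -> evQ n z = z) ->
  ev n (ev w e) = ev w (ev n e).
Proof.
move=> Gn Gw nid; elim: w e Gw => //= [[x b] w] IH e /andP[/= Gx Gw].
rewrite -IH //; move: (ev w e) => e'; rewrite /letter /=.
have nT : forall e0, ev n (T x e0) = T x (ev n e0) by move=> e0; rewrite ev_conj // nid.
case: b => //=.
by rewrite -[LHS](Ti_T _ Gx) -nT T_Ti.
Qed.


Lemma ev_conjV w x e : inA G w -> x \in G -> ev w (Ti x e) = Ti (evQ w x) (ev w e).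
Proof.
move=> Gw Gx; have Gx' : evQ w x \in G by apply: (@evQ_in G) => //; exact: fG.
by rewrite -[LHS](Ti_T _ Gx') -ev_conj // T_Ti.
Qed.

Section Slice.
Variables (A : {group gT}) (gam : gT -> S -> S).
Hypotheses (sAG : A \subset G) (FA : forall u, u \in A -> F u \in A)
  (FiA : forall u, u \in A -> Fi u \in A)
  (gamP : forall x y s, x \in A -> y \in A -> th x y (gam y s) = gam (qop f x y) s).

Lemma ev_slice w y s : inA A w -> y \in A -> ev w (y, gam y s) = (evQ w y, gam (evQ w y) s).
Proof.
elim: w => //= [[x b] w] IH /andP[/= Ax Aw] Ay; rewrite IH //.
have Au : evQ w y \in A by apply: evQ_in.
have Gu : evQ w y \in G by apply: (subsetP sAG).
have Gx : x \in G by apply: (subsetP sAG).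
rewrite /letter /letterQ; case: b => /=.
  by rewrite /Lq Gu gamP.
rewrite /Lqi Gu; set v := x * Fi (x^-1 * evQ w y).
have Av : v \in A by rewrite /v groupM ?FiA ?groupM ?groupV.
have Gv : v \in G by apply: (subsetP sAG).
have Ev : qop f x v = evQ w y by have := qopLqi Gx Gu; rewrite /Lqi Gu.
by rewrite -{1}Ev -gamP // thK.
Qed.
End Slice.

Definition htype (A : {set gT}) w := inA A w /\ forall z, z \in G -> evQ w z = evQ w 1 * z.

Definition wpow (w : seq (gT * bool)) m := flatten (nseq m w).
Definition cw (a b : seq (gT * bool)) := a ++ b ++ winv a ++ winv b.
Definition Dw x : seq (gT * bool) := [:: (x, true); (1, false)].
Definition cj (w : seq (gT * bool)) : seq (gT * bool) := (1, true) :: w ++ [:: (1, false)].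

Lemma inA_cat (A : {set gT}) w1 w2 : inA A (w1 ++ w2) = inA A w1 && inA A w2.
Proof. exact: all_cat. Qed.

Lemma inA_sub (A : {group gT}) w : A \subset G -> inA A w -> inA G w.
Proof. by move=> sAG /allP Aw; apply/allP => a /Aw; apply: (subsetP sAG). Qed.

Lemma inA_wpow (A : {set gT}) w m : inA A w -> inA A (wpow w m).
Proof. by move=> Aw; elim: m => //= m IH; rewrite inA_cat Aw. Qed.

Lemma ev_wpow w m e : ev (wpow w m) e = iter m (ev w) e.
Proof. by elim: m => //= m IH; rewrite ev_cat IH. Qed.

Lemma evQ_wpow w m z : evQ (wpow w m) z = iter m (evQ w) z.
Proof. by elim: m => //= m IH; rewrite evQ_cat IH. Qed.

Lemma Lq1 z : z \in G -> Lq 1 z = F z.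
Proof. by move=> Gz; rewrite /Lq Gz qopE invg1 !mul1g. Qed.
Lemma Lqi1 z : z \in G -> Lqi 1 z = Fi z.
Proof. by move=> Gz; rewrite /Lqi Gz invg1 !mul1g. Qed.

Lemma FiM : {in G &, {morph Fi : x y / x * y}}.
Proof.
move=> x y Gx Gy; apply: (can_inj FK).
by rewrite fM ?fiG // !FKV.
Qed.
Lemma Fi1 : Fi 1 = 1.
Proof. by rewrite -{1}f1 FK. Qed.

Section Htype.
Variables (A : {group gT}).
Hypotheses (sAG : A \subset G) (FA : forall u, u \in A -> F u \in A)
  (FiA : forall u, u \in A -> Fi u \in A).

Lemma htype1 w : htype A w -> evQ w 1 \in A.
Proof. by case=> Aw _; apply: evQ_in. Qed.

Lemma htype_nil : htype A [::].
Proof. by split=> // z _; rewrite mul1g. Qed.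

Lemma htype_cat w1 w2 : htype A w1 -> htype A w2 -> htype A (w1 ++ w2).
Proof.
move=> [A1 E1] [A2 E2]; split; first by rewrite inA_cat A1.
have G1 := subsetP sAG _ (htype1 (conj A1 E1)).
have G2 := subsetP sAG _ (htype1 (conj A2 E2)).
move=> z Gz; rewrite !evQ_cat E2 // (E2 1) // E1 ?groupM // (E1 (_ * 1)) ?groupM //.
by rewrite mulg1 mulgA.
Qed.

Lemma htype_inv w : htype A w -> htype A (winv w).
Proof.
move=> [Aw Ew]; have Gw := inA_sub sAG Aw.
have Gh := subsetP sAG _ (htype1 (conj Aw Ew)).
have key : forall z, z \in G -> evQ (winv w) z = (evQ w 1)^-1 * z.
  move=> z Gz; rewrite -{1}(mulKVg (evQ w 1) z) -Ew ?groupM ?groupV //.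
  by rewrite evQ_winvK.
split; first by rewrite inA_winv.
by move=> z Gz; rewrite !key // mulg1.
Qed.

Lemma htype_D x : x \in A -> htype A (Dw x).
Proof.
move=> Ax; have Gx := subsetP sAG _ Ax.
split; first by rewrite /inA /= Ax group1.
move=> z Gz; rewrite /= /letterQ /= Lqi1 // Lqi1 // Fi1 /Lq fiG // group1 !qopE.
rewrite mulg1 fM ?groupV ?fiG // FKV mulgA //.
Qed.

Lemma htype_cj w : htype A w -> htype A (cj w).
Proof.
move=> [Aw Ew]; have Gw := inA_sub sAG Aw.
have Gh := subsetP sAG _ (htype1 (conj Aw Ew)).
split; first by move: Aw; rewrite /inA /cj /= group1 all_cat => -> /=; rewrite group1.
move=> z Gz; rewrite /cj /= !evQ_cat /= /letterQ /= !Lqi1 // Fi1.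
have Gz' : Fi z \in G by apply: fiG.
rewrite Ew // (Ew 1) // mulg1 !Lq1 ?groupM //.
by rewrite fM // FKV.
Qed.

Lemma htype_wpow w m : htype A w -> htype A (wpow w m).
Proof. by move=> hw; elim: m => [|m IH] /=; [exact: htype_nil | exact: htype_cat]. Qed.

Lemma htype_wpow1 w m : htype A w -> evQ (wpow w m) 1 = (evQ w 1) ^+ m.
Proof.
move=> hw; elim: m => [|m IH] //=; rewrite evQ_cat IH.
case: hw => Aw Ew; rewrite Ew ?groupX // ?(subsetP sAG) ?htype1 //.
by rewrite expgS.
Qed.

End Htype.

Lemma winv_cat w1 w2 : winv (w1 ++ w2) = winv w2 ++ winv w1.
Proof. by rewrite /winv map_cat rev_cat. Qed.

Lemma htypeE (A : {set gT}) w z : htype A w -> z \in G -> evQ w z = evQ w 1 * z.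
Proof. by case=> _ E z'; apply: E. Qed.

Lemma htype_sub (A : {group gT}) w : A \subset G -> htype A w -> htype G w.
Proof. by move=> sAG [Aw Ew]; split => //; apply: inA_sub Aw. Qed.

Lemma evQ_winv1 w : htype G w -> evQ (winv w) 1 = (evQ w 1)^-1.
Proof.
move=> hw; have hi := htype_inv (subxx G) fG fiG hw.
have Gh : evQ w 1 \in G by apply: (htype1 (subxx G)).
have := evQ_winvK 1 hw.1.
by rewrite (htypeE hi Gh) => E; apply: (mulIg (evQ w 1)); rewrite E mulVg.
Qed.

Lemma cw_id (A B : {group gT}) a b : A \subset G -> B \subset G ->
  (forall u, u \in A -> F u \in A) -> (forall u, u \in A -> Fi u \in A) ->
  (forall u, u \in B -> F u \in B) -> (forall u, u \in B -> Fi u \in B) ->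
  (forall u v, u \in A -> v \in B -> u * v = v * u) ->
  htype A a -> htype B b -> forall z, z \in G -> evQ (cw a b) z = z.
Proof.
move=> sAG sBG FA FiA FB FiB cAB ha hb.
have hA := htype1 sAG FA FiA ha; have hB := htype1 sBG FB FiB hb.
have ha' := htype_sub sAG ha; have hb' := htype_sub sBG hb.
have hc : htype G (cw a b).
  by rewrite /cw; do 3! apply: htype_cat => //; apply: htype_inv.
move=> z Gz; rewrite (htypeE hc Gz) /cw !evQ_cat.
have GA := subsetP sAG _ hA; have GB := subsetP sBG _ hB.
rewrite (htypeE (htype_inv (subxx G) fG fiG hb')) // evQ_winv1 // mulg1.
rewrite (htypeE (htype_inv (subxx G) fG fiG ha')) ?groupV // evQ_winv1 //.
rewrite (htypeE hb') ?groupM ?groupV // (htypeE ha') ?groupM ?groupV //.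
by rewrite !mulgA (cAB _ _ hA hB) mulgK mulgV mul1g.
Qed.

Lemma cw_pow a b m e : inA G a -> inA G b ->
  (forall k z, z \in G -> evQ (cw (wpow a k) b) z = z) ->
  ev (cw (wpow a m) b) e = iter m (ev (cw a b)) e.
Proof.
move=> Ga Gb cen; elim: m e => [|m IH] e.
  by rewrite /cw /= ev_cat ev_winvKV.
rewrite iterSr -IH /=.
set am := wpow a m.
have Gam : inA G am by apply: inA_wpow.
rewrite /cw !winv_cat !ev_cat.
set X := ev (winv a) (ev (winv b) e).
have -> : ev am (ev b (ev (winv am) X)) = ev (cw am b) (ev b X).
  by rewrite /cw !ev_cat ev_winvK.
have Gc : inA G (cw am b) by rewrite /cw !inA_cat !inA_winv Gam Gb.
rewrite -(ev_central (n := cw am b)) //; last exact: cen.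
by rewrite /cw !ev_cat.
Qed.

Lemma iter_coprime (U : Type) (h : U -> U) n m : 0 < n -> coprime n m ->
  (forall p : U, iter n h p = p) -> (forall p : U, iter m h p = p) -> forall p : U, h p = p.
Proof.
move=> n0 cnm hn hm x.
have itm : forall q (y : U), iter (q * m) h y = y.
  by move=> q y; rewrite iterM; elim: q => //= q ->; rewrite hm.
have itn : forall q (y : U), iter (q * n) h y = y.
  by move=> q y; rewrite iterM; elim: q => //= q ->; rewrite hn.
case: (Bezoutl m n0) => u _; rewrite (eqP cnm) => dv.
have := itn ((1 + u * m) %/ n) x; by rewrite divnK // iterD itm.
Qed.

Section Comm.
Variables (H K : {group gT}).
Hypotheses (sHG : H \subset G) (sKG : K \subset G)
  (FH : forall u, u \in H -> F u \in H) (FiH : forall u, u \in H -> Fi u \in H)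
  (FK : forall u, u \in K -> F u \in K) (FiK : forall u, u \in K -> Fi u \in K)
  (cHK : forall u v, u \in H -> v \in K -> u * v = v * u)
  (cop : coprime #|H| #|K|).

Lemma htype_comm a b e : htype H a -> htype K b -> ev a (ev b e) = ev b (ev a e).
Proof.
move=> ha hb.
have cKH : forall u v, u \in K -> v \in H -> u * v = v * u by move=> u v Ku Hv; symmetry; apply: cHK.
have Ga := (ha.1 : inA H a); have Ga' := inA_sub sHG Ga.
have Gb := (hb.1 : inA K b); have Gb' := inA_sub sKG Gb.
pose Fc := ev (cw a b); pose Gc := ev (cw b a).
have FG : forall p : E, Fc (Gc p) = p.
  move=> p; rewrite /Fc /Gc /cw !ev_cat.
  by rewrite ev_winvK // ev_winvK // ev_winvKV // ev_winvKV.
have hH : forall p : E, iter #|H| Fc p = p.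
  move=> p; rewrite -cw_pow //; last first.
    by move=> k z Gz; apply: (cw_id sHG sKG FH FiH FK FiK cHK) => //; apply: (htype_wpow sHG FH FiH).
  set am := wpow a #|H|.
  have ham : htype H am by apply: (htype_wpow sHG FH FiH).
  have am1 : forall z, z \in G -> evQ am z = z.
    move=> z Gz; rewrite (htypeE ham Gz) (htype_wpow1 sHG FH FiH) //.
    by rewrite expg_cardG ?mul1g // (htype1 sHG FH FiH).
  have Gam : inA G am by apply: inA_wpow.
  by rewrite /cw !ev_cat (ev_central (n := am)) // ev_winvKV // ev_winvKV.
have hK : forall p : E, iter #|K| Gc p = p.
  move=> p; rewrite -cw_pow //; last first.
    by move=> k z Gz; apply: (cw_id sKG sHG FK FiK FH FiH cKH) => //; apply: (htype_wpow sKG FK FiK).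
  set bm := wpow b #|K|.
  have hbm : htype K bm by apply: (htype_wpow sKG FK FiK).
  have bm1 : forall z, z \in G -> evQ bm z = z.
    move=> z Gz; rewrite (htypeE hbm Gz) (htype_wpow1 sKG FK FiK) //.
    by rewrite expg_cardG ?mul1g // (htype1 sKG FK FiK).
  have Gbm : inA G bm by apply: inA_wpow.
  by rewrite /cw !ev_cat (ev_central (n := bm)) // ev_winvKV // ev_winvKV.
have itFG : forall m (p : E), iter m Fc (iter m Gc p) = p.
  by elim=> // m IH p; rewrite iterSr iterS FG IH.
have hK' : forall p : E, iter #|K| Fc p = p.
  by move=> p; rewrite -{1}(hK p) itFG.
have Fid := iter_coprime (cardG_gt0 H) cop hH hK'.
have := Fid (ev b (ev a e)); rewrite /Fc /cw !ev_cat ev_winvK // ev_winvK //.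
Qed.
End Comm.


Lemma qcocycle_sub (A : {group gT}) : A \subset G -> qcocycle A (qop f) th.
Proof.
move=> sAG; case: cocy => b c i; split.
- by move=> x y Ax Ay; apply: b; apply: (subsetP sAG).
- by move=> x y z Ax Ay Az; apply: c; apply: (subsetP sAG).
- by move=> x Ax; apply: i; apply: (subsetP sAG).
Qed.

Section Lift.
Variables (A : {group gT}).
Hypotheses (sAG : A \subset G) (FA : forall u, u \in A -> F u \in A)
  (FiA : forall u, u \in A -> Fi u \in A).

Let R y := exists w, htype A w /\ evQ w 1 = y.

Let R1 : R 1. Proof. by exists [::]; split => //; apply: htype_nil. Qed.

Let RM u v : R u -> R v -> R (u * v).
Proof.
move=> [w1 [h1 <-]] [w2 [h2 <-]]; exists (w1 ++ w2); split; first exact: htype_cat.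
rewrite evQ_cat (htypeE h1) //; apply: (subsetP sAG); exact: htype1.
Qed.

Let RV u : R u -> R u^-1.
Proof.
move=> [w [h <-]]; exists (winv w); split; first exact: htype_inv.
by apply: evQ_winv1; apply: htype_sub h.
Qed.

Let RD u : u \in A -> R (u * (F u)^-1).
Proof.
move=> Au; have Gu := subsetP sAG _ Au.
exists (Dw u); split; first exact: htype_D.
by rewrite /= /letterQ /= Lqi1 // Fi1 /Lq group1 qopE mulg1 fV.
Qed.

Let RF u : u \in A -> R u -> R (F u).
Proof.
move=> Au Ru; have := RM (RV (RD Au)) Ru.
by rewrite invMg invgK mulgKV.
Qed.

Let RFi u : u \in A -> R (F u) -> R u.
Proof. by move=> Au RFu; have := RM (RD Au) RFu; rewrite mulgKV. Qed.

Lemma lift_exists : qconnected A (qop f) -> forall h, h \in A -> R h.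
Proof.
move=> conn h Ah.
suff: forall a b, clos_refl_trans gT (lstep A (qop f)) a b -> a \in A -> R a -> b \in A /\ R b.
  by move=> /(_ 1 h (conn 1 h (group1 A) Ah) (group1 A) R1) [].
move=> a b; elim => {a b} [a b [x Ax [-> | E]]|a|a b c _ IH1 _ IH2] Aa Ra //.
- split; first exact: qop_in.
  have Gx := subsetP sAG _ Ax; have Ga := subsetP sAG _ Aa.
  have -> : qop f x a = (x * (F x)^-1) * F a.
    by rewrite qopE fM ?groupV // fV // mulgA.
  by apply: RM; [exact: RD | exact: RF].
- have Gx := subsetP sAG _ Ax; have Ga := subsetP sAG _ Aa.
  have Eb : b = x * Fi (x^-1 * a) by rewrite E qopE mulKg FK mulKVg.
  have Ab : b \in A by rewrite Eb groupM ?FiA ?groupM ?groupV.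
  have Gb := subsetP sAG _ Ab.
  split => //; apply: RFi => //.
  have -> : F b = (x * (F x)^-1)^-1 * a.
    by rewrite E qopE fM ?groupV // fV // invMg invgK !mulgA mulgKV mulgV mul1g.
  by apply: RM => //; apply: RV; apply: RD.
- by case: (IH1 Aa Ra) => Ab Rb; apply: IH2.
Qed.
End Lift.


Section Prod.
Variables (H K : {group gT}).
Hypotheses (sHG : H \subset G) (sKG : K \subset G)
  (FH : forall u, u \in H -> F u \in H) (FiH : forall u, u \in H -> Fi u \in H)
  (FK : forall u, u \in K -> F u \in K) (FiK : forall u, u \in K -> Fi u \in K)
  (cHK : forall u v, u \in H -> v \in K -> u * v = v * u)
  (cop : coprime #|H| #|K|)
  (mulHK : forall g, g \in G -> exists h k, [/\ h \in H, k \in K & g = h * k])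
  (TI : forall u, u \in H -> u \in K -> u = 1)
  (scH : qsimply_connected H (qop f)) (scK : qsimply_connected K (qop f)).

Lemma T_fst x e : (T x e).1 = Lq x e.1.
Proof. by case: e => z s; rewrite /T /Lq /=; case: (z \in G). Qed.

Lemma T1_fix s : T 1 (1, s) = (1, s).
Proof.
case: cocy => _ _ idm; rewrite /T group1 idm //.
by rewrite qopE invg1 !mul1g f1.
Qed.

Lemma T_Dw x e : x \in G -> T x e = ev (Dw x) (T 1 e).
Proof. by move=> Gx; rewrite /= /letter /= Ti_T. Qed.

Lemma T_cj w e : inA G w -> T 1 (ev w e) = ev (cj w) (T 1 e).
Proof. by move=> Gw; rewrite /cj /= ev_cat /= /letter /= Ti_T. Qed.

Lemma cj_cat w1 w2 e : ev (cj (w1 ++ w2)) e = ev (cj w1) (ev (cj w2) e).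
Proof. by rewrite /cj /= !ev_cat /= /letter /= Ti_T ?group1. Qed.

Let hcomm := htype_comm sHG sKG FH FiH FK FiK cHK cop.

Lemma Dw_split h1 k1 e : h1 \in H -> k1 \in K ->
  ev (Dw (h1 * k1)) e = ev (Dw h1) (ev (Dw k1) e).
Proof.
move=> Hh Kk.
have Gh := subsetP sHG _ Hh; have Gk := subsetP sKG _ Kk.
have [bt [hb bk]] := lift_exists sKG FK FiK scK.1 Kk.
have Gbt : inA G bt := inA_sub sKG hb.1.
have key : forall e', ev (Dw h1) e' = T (k1 * h1) (Ti k1 e').
  move=> e'.
  rewrite -{1}(ev_winvKV e' Gbt) (hcomm _ (htype_D sHG Hh) hb).
  rewrite /= /letter /= ev_conj ?Lqi_in ?group1 // ev_conjV ?group1 // ev_winvKV //.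
  by rewrite (htypeE hb Gh) bk.
by rewrite key /= /letter /= Ti_T // -(cHK Hh Kk).
Qed.

Lemma prod_cobound : qcobound G (qop f) th.
Proof.
have [_ /(_ S th (qcocycle_sub sHG)) [gH [gHb gHP]]] := scH.
have [_ /(_ S th (qcocycle_sub sKG)) [gK [gKb gKP]]] := scK.
have liftH := lift_exists sHG FH FiH scH.1.
have liftK := lift_exists sKG FK FiK scK.1.
pose P g w := exists a b, [/\ w = a ++ b, htype H a, htype K b & evQ w 1 = g].
have Pex : forall g, g \in G -> exists w, P g w.
  move=> g /mulHK [h [k [Hh Kk ->]]].
  have [a [ha ah]] := liftH h Hh; have [b [hb bk]] := liftK k Kk.
  exists (a ++ b), a, b; split => //.
  by rewrite evQ_cat bk (htypeE ha) ?ah // (subsetP sKG).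
pose rho g := epsilon (inhabits [::]) (P g).
have rhoP : forall g, g \in G -> P g (rho g).
  by move=> g Gg; apply: epsilon_spec; apply: Pex.
have rhoG : forall g, g \in G -> inA G (rho g).
  move=> g /rhoP [a [b [-> ha hb _]]].
  by rewrite inA_cat (inA_sub sHG ha.1) (inA_sub sKG hb.1).
pose gam g s := (ev (rho g) (1, s)).2.
have rho1 : forall g s, g \in G -> ev (rho g) (1, s) = (g, gam g s).
  move=> g s Gg; rewrite /gam; case: (rhoP g Gg) => a [b [_ _ _ E1]].
  by rewrite [LHS]surjective_pairing ev_fst /= E1.
have key : forall x y s, x \in G -> y \in G ->
    T x (ev (rho y) (1, s)) = ev (rho (qop f x y)) (1, s).
  move=> x y s Gx Gy.
  have Gxy : qop f x y \in G by apply: qop_in.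
  case: (rhoP y Gy) => a [b [Ew ha hb Ey]].
  case: (rhoP _ Gxy) => a2 [b2 [Ew2 ha2 hb2 Exy]].
  have [h1 [k1 [Hh Kk Ex]]] := mulHK Gx.
  have Gw : inA G (rho y) := rhoG y Gy.
  have hDh : htype H (Dw h1) := htype_D sHG Hh.
  have hDk : htype K (Dw k1) := htype_D sKG Kk.
  have hcja : htype H (cj a) := htype_cj sHG FH FiH ha.
  have hcjb : htype K (cj b) := htype_cj sKG FK FiK hb.
  have hA' : htype H (Dw h1 ++ cj a) := htype_cat sHG FH FiH hDh hcja.
  have hB' : htype K (Dw k1 ++ cj b) := htype_cat sKG FK FiK hDk hcjb.
  have hA2 : htype H (winv a2 ++ (Dw h1 ++ cj a)) :=
    htype_cat sHG FH FiH (htype_inv sHG FH FiH ha2) hA'.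
  have hB2 : htype K (winv b2 ++ (Dw k1 ++ cj b)) :=
    htype_cat sKG FK FiK (htype_inv sKG FK FiK hb2) hB'.
  have S1 : T x (ev (rho y) (1, s)) = ev (Dw h1 ++ cj a) (ev (Dw k1 ++ cj b) (1, s)).
    rewrite (T_Dw _ Gx) (T_cj _ Gw) T1_fix Ew cj_cat Ex Dw_split // !ev_cat.
    by rewrite (hcomm _ hcja hDk).
  have S2 : ev (winv (rho (qop f x y))) (T x (ev (rho y) (1, s))) =
      ev (winv a2 ++ (Dw h1 ++ cj a)) (ev (winv b2 ++ (Dw k1 ++ cj b)) (1, s)).
    have := hcomm (ev (Dw k1 ++ cj b) (1, s)) hA2 (htype_inv sKG FK FiK hb2).
    by rewrite S1 Ew2 winv_cat !ev_cat => ->.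
  set A2 := winv a2 ++ (Dw h1 ++ cj a) in hA2 S2.
  set B2 := winv b2 ++ (Dw k1 ++ cj b) in hB2 S2.
  have HA2 := htype1 sHG FH FiH hA2; have KB2 := htype1 sKG FK FiK hB2.
  have GB2 := subsetP sKG _ KB2.
  have F1 : evQ A2 1 * evQ B2 1 = 1.
    have := congr1 fst S2; rewrite !ev_fst /= T_fst ev_fst /= Ey /Lq Gy.
    have W := evQ_winvK 1 (rhoG _ Gxy); rewrite Exy in W; rewrite W.
    by rewrite (htypeE hA2 GB2) => E; rewrite -E.
  have A21 : evQ A2 1 = 1.
    apply: TI => //; have -> : evQ A2 1 = (evQ B2 1)^-1.
      by apply: (mulIg (evQ B2 1)); rewrite F1 mulVg.
    by rewrite groupV.
  have B21 : evQ B2 1 = 1 by move: F1; rewrite A21 mul1g.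
  have [gKi _ gKiK] := gKb 1 (group1 K).
  have [gHi _ gHiK] := gHb 1 (group1 H).
  have evB : ev B2 (1, s) = (1, s).
    rewrite -(gKiK s) (ev_slice sKG FK FiK (fun x y s Hx Hy => gKP x y Hx Hy s)) //.
    - by rewrite B21.
    - exact: hB2.1.
  have evA : ev A2 (1, s) = (1, s).
    rewrite -(gHiK s) (ev_slice sHG FH FiH (fun x y s Hx Hy => gHP x y Hx Hy s)) //.
    - by rewrite A21.
    - exact: hA2.1.
  rewrite evB evA in S2.
  by rewrite -[in RHS]S2 ev_winvKV // rhoG.
exists gam; split.
- move=> y Gy; exists (fun t => (ev (winv (rho y)) (y, t)).2).
  + by move=> s /=; rewrite -rho1 // ev_winvK // rhoG.
  + move=> t /=; have := ev_winvKV (y, t) (rhoG y Gy).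
    have E1 : ev (winv (rho y)) (y, t) = (1, (ev (winv (rho y)) (y, t)).2).
      rewrite [LHS]surjective_pairing ev_fst /=; congr (_, _).
      case: (rhoP y Gy) => a [b [_ _ _ E1]].
      by have := evQ_winvK 1 (rhoG y Gy); rewrite E1.
    by rewrite E1 rho1 // => -[].
- move=> x y Gx Gy s.
  have Gxy : qop f x y \in G by apply: qop_in.
  by have := key x y s Gx Gy; rewrite rho1 // rho1 // /T /= Gy => -[].
Qed.

End Prod.

End Basics.
Section Proj.
Variables (gT : finGroupType) (G H K : {group gT}) (f : {perm gT}).
Implicit Types x y z u : gT.
Local Notation F := (pf f).
Local Notation Fi := (pf f^-1).
Hypothesis fM : {in G &, {morph F : x y / x * y}}.
Hypothesis fG : forall x, x \in G -> F x \in G.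
Hypothesis fiG : forall x, x \in G -> Fi x \in G.
Hypotheses (sHG : H \subset G) (sKG : K \subset G)
  (FH : forall u, u \in H -> F u \in H) (FK : forall u, u \in K -> F u \in K)
  (cHK : forall u v, u \in H -> v \in K -> u * v = v * u)
  (mulHK : forall g, g \in G -> exists h k, [/\ h \in H, k \in K & g = h * k])
  (tiHK : H :&: K = 1).

Let p := divgr H K.

Let pE h k : h \in H -> k \in K -> p (h * k) = h.
Proof. by move=> Hh Kk; rewrite /p divgrMid. Qed.

Let pH g : g \in G -> p g \in H.
Proof. by move=> /mulHK [h [k [Hh Kk ->]]]; rewrite pE. Qed.

Let pid h : h \in H -> p h = h.
Proof. by move=> Hh; have := pE Hh (group1 K); rewrite mulg1. Qed.

Let pM g1 g2 : g1 \in G -> g2 \in G -> p (g1 * g2) = p g1 * p g2.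
Proof.
move=> /mulHK [h1 [k1 [H1 K1 ->]]] /mulHK [h2 [k2 [H2 K2 ->]]].
have -> : h1 * k1 * (h2 * k2) = (h1 * h2) * (k1 * k2).
  by rewrite -mulgA (mulgA k1) -(cHK H2 K1) !mulgA.
by rewrite !pE ?groupM.
Qed.

Let pV g : g \in G -> p g^-1 = (p g)^-1.
Proof.
move=> /mulHK [h [k [Hh Kk ->]]]; rewrite invMg -(cHK (groupVr Hh) (groupVr Kk)).
by rewrite !pE ?groupV.
Qed.

Let pF g : g \in G -> p (F g) = F (p g).
Proof.
move=> /mulHK [h [k [Hh Kk ->]]].
rewrite fM ?(subsetP sHG _ Hh) ?(subsetP sKG _ Kk) // !pE ?FH ?FK //.
Qed.

Let p_qop x y : x \in G -> y \in G -> p (qop f x y) = qop f (p x) (p y).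
Proof.
move=> Gx Gy; rewrite !qopE pM ?fG ?groupM ?groupV // pF ?groupM ?groupV //.
by rewrite pM ?groupV // pV.
Qed.

Lemma proj_conn : qconnected G (qop f) -> qconnected H (qop f).
Proof.
move=> conn a b Ha Hb.
have Ga := subsetP sHG _ Ha; have Gb := subsetP sHG _ Hb.
suff: forall u v, clos_refl_trans gT (lstep G (qop f)) u v -> u \in G ->
    clos_refl_trans gT (lstep H (qop f)) (p u) (p v) /\ v \in G.
  by move=> /(_ a b (conn a b Ga Gb) Ga) []; rewrite !pid.
move=> u v; elim => {u v} [u v [x Gx [-> | E]]|u|u v w _ IH1 _ IH2] Gu.
- split; last exact: qop_in.
  by apply: rt_step; exists (p x); [exact: pH | left; rewrite p_qop].
- have Gv : v \in G by rewrite -(qop_memE fG fiG _ Gx) -E.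
  split => //; apply: rt_step; exists (p x); first exact: pH.
  by right; rewrite E p_qop.
- by split => //; apply: rt_refl.
- case: (IH1 Gu) => c1 Gv; case: (IH2 Gv) => c2 Gw; split => //.
  exact: rt_trans c1 c2.
Qed.

Lemma proj_sc : qsimply_connected G (qop f) -> qsimply_connected H (qop f).
Proof.
move=> [conn sc]; split; first exact: proj_conn.
move=> S th [bij cc idm].
have cG : qcocycle G (qop f) (fun x y => th (p x) (p y)).
  split.
  - by move=> x y Gx Gy; apply: bij; apply: pH.
  - move=> x y z Gx Gy Gz s; rewrite !p_qop //; apply: cc; exact: pH.
  - by move=> x Gx s; apply: idm; apply: pH.
have [gam [gb gP]] := sc S _ cG.
exists gam; split.
- by move=> y Hy; apply: gb; apply: (subsetP sHG).
- move=> x y Hx Hy s; have := gP x y (subsetP sHG _ Hx) (subsetP sHG _ Hy) s.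
  by rewrite !pid.
Qed.
End Proj.

Lemma triv_sc (gT : finGroupType) (A : {group gT}) (f : {perm gT}) :
  A :=: 1 -> qsimply_connected A (qop f).
Proof.
move=> A1; have A1' : forall u : gT, u \in A -> u = 1 by move=> u; rewrite A1 => /set1gP.
split.
- by move=> a b /A1' -> /A1' ->; apply: rt_refl.
- move=> S th [_ _ idm]; exists (fun _ => id); split.
  + by move=> y _; exists id.
  + by move=> x y /A1' -> /A1' -> s; rewrite idm ?group1 // A1 inE.
Qed.

Lemma dprod_facts (gT : finGroupType) (G H K : {group gT}) : H \x K = G ->
  [/\ H \subset G, K \subset G,
      (forall u v, u \in H -> v \in K -> u * v = v * u),
      (forall g, g \in G -> exists h k, [/\ h \in H, k \in K & g = h * k]) &
      H :&: K = 1].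
Proof.
move=> dp; have [_ defG cKH tiHK] := dprodP dp.
split => //.
- by rewrite -defG mulG_subl.
- by rewrite -defG mulG_subr.
- by move=> u v Hu Kv; symmetry; apply: (centP (subsetP cKH v Kv)).
- by move=> g; rewrite -defG => /mulsgP [h k Hh Kk ->]; exists h, k.
Qed.

Lemma TI_of (gT : finGroupType) (H K : {group gT}) : H :&: K = 1 ->
  forall u, u \in H -> u \in K -> u = 1.
Proof. by move=> ti u Hu Ku; apply/set1gP; rewrite -ti inE Hu Ku. Qed.

Unset Implicit Arguments.
Set Strict Implicit.

Theorem theorem3p13 (gT : finGroupType) (G : {group gT}) (f : {perm gT}) :
  nilpotent G -> f \in Aut G -> qconnected G (qop f) ->
  (qsimply_connected G (qop f) <->
   forall (p : nat) (Sp : {group gT}), prime p -> p %| #|G| ->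
     p.-Sylow(G) Sp -> qsimply_connected Sp (qop f)).
Proof.
move=> nilG fA conn.
have fiA : f^-1 \in Aut G by rewrite groupV.
have fM : {in G &, {morph pf f : x y / x * y}} := morphicP (Aut_morphic fA).
have charstab : forall B : {group gT}, B \char G ->
    (forall u, u \in B -> pf f u \in B) /\ (forall u, u \in B -> pf f^-1 u \in B).
  move=> B /andP [_ /forall_inP ch]; split => u Bu.
  - by apply: (subsetP (ch _ fA)); apply: imset_f.
  - by apply: (subsetP (ch _ fiA)); apply: imset_f.
have [fG fiG] := charstab G (char_refl G).
have coreF : forall pi, (forall u, u \in 'O_pi(G) -> pf f u \in 'O_pi(G)) /\
    (forall u, u \in 'O_pi(G) -> pf f^-1 u \in 'O_pi(G)).
  by move=> pi; apply: charstab; apply: pcore_char.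
have coreC : forall pi, qconnected 'O_pi(G) (qop f).
  move=> pi; have [sHG sKG cHK mulHK ti] := dprod_facts (nilpotent_pcoreC pi nilG).
  have [FH _] := coreF pi; have [FK _] := coreF pi^'.
  exact: (proj_conn fM fG fiG sHG sKG FH FK cHK mulHK ti conn).
split.
- move=> sc p Sp pr pdvd syl.
  have -> : (Sp : {set gT}) = 'O_p(G) := nilpotent_Hall_pcore nilG syl.
  have [sHG sKG cHK mulHK ti] := dprod_facts (nilpotent_pcoreC p nilG).
  have [FH _] := coreF p; have [FK _] := coreF p^'.
  exact: (proj_sc fM fG fiG sHG sKG FH FK cHK mulHK ti sc).
move=> hyp.
suff: forall n pi, #|'O_pi(G)| <= n -> qsimply_connected 'O_pi(G) (qop f).
  by move=> /(_ #|G| \pi(G)); rewrite pcore_pgroup_id ?pgroup_pi //; apply.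
elim=> [|n IH] pi le.
  by rewrite leqn0 in le; have := cardG_gt0 'O_pi(G); rewrite (eqP le).
set A := 'O_pi(G).
have sAG : A \subset G := pcore_sub pi G.
have [FA FiA] := coreF pi.
case: (leqP #|A| 1) => [A1|A1].
  by apply: triv_sc; apply: card_le1_trivg.
set p := pdiv #|A|.
have pr : prime p := pdiv_prime A1.
have pA : p %| #|A| := pdiv_dvd _.
have nilA : nilpotent A := nilpotentS sAG nilG.
have [sHA sKA cHK mulHK ti] := dprod_facts (nilpotent_pcoreC p nilA).
have p_pi : p \in pi.
  apply: (pnatPpi (pcore_pgroup pi G)); by rewrite mem_primes pr cardG_gt0.
have HE : 'O_p(A) = 'O_p(G).
  by rewrite -pcoreI; apply: eq_pcore => q; rewrite !inE; case: eqP => // ->.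
have KE : 'O_p^'(A) = 'O_[predI p^' & pi](G) by rewrite -pcoreI.
have scH : qsimply_connected 'O_p(A) (qop f).
  rewrite HE; apply: (hyp p) => //; first by apply: dvdn_trans pA (cardSg sAG).
  exact: nilpotent_pcore_Hall.
have scK : qsimply_connected 'O_p^'(A) (qop f).
  rewrite KE; apply: IH; rewrite -KE -ltnS; apply: leq_trans le.
  rewrite ltn_neqAle subset_leq_card // andbT.
  apply/negP => /eqP E; have := pcore_pgroup p^' A; rewrite /pgroup E p'natE //.
  by rewrite pA.
have [FH FiH] : (forall u, u \in 'O_p(A) -> pf f u \in 'O_p(A)) /\
    (forall u, u \in 'O_p(A) -> pf f^-1 u \in 'O_p(A)) by rewrite HE; apply: coreF.
have [FK FiK] : (forall u, u \in 'O_p^'(A) -> pf f u \in 'O_p^'(A)) /\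
    (forall u, u \in 'O_p^'(A) -> pf f^-1 u \in 'O_p^'(A)) by rewrite KE; apply: coreF.
have cop : coprime #|'O_p(A)| #|'O_p^'(A)|.
  exact: pnat_coprime (pcore_pgroup _ _) (pcore_pgroup _ _).
split; first exact: coreC.
move=> S th cocy.
have fMA : {in A &, {morph pf f : x y / x * y}} := sub_in2 (subsetP sAG) fM.
exact: (prod_cobound fMA FA FiA cocy sHA sKA FH FiH FK FiK cHK cop mulHK (TI_of ti) scH scK).
Qed.
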